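(* Let $U,V\in\mathbb{R}_{\max}^{m\times n}$, $b,d\in\mathbb{R}_{\max}^m$, $p\in\mathbb{R}_{\max}^n$, $q\in(\mathbb{R}\cup\{+\infty\})^n$, and suppose all finite entries of $p,q,U,b,V,d$ are integers. Consider the problem of minimizing $x^-\otimes p\oplus q^-\otimes x$ over $x\in\mathbb{R}^n$ subject to $U\otimes x\oplus b\leq V\otimes x\oplus d$. If the optimal value of this problem is finite, then it is an integer multiple of $1/2$.
   Context: $\mathbb{R}_{\max}=\mathbb{R}\cup\{-\infty\}$ with $a\oplus b=\max(a,b)$ and $a\otimes b=a+b$, extended to matrices and vectors in the usual way ($(A\otimes x)_i=\max_j(a_{ij}+x_j)$, componentwise max for $\oplus$). The conjugate of $a\in\mathbb{R}\cup\{\pm\infty\}$ is $a^-=-a$ if $a\in\mathbb{R}$, $+\infty$ if $a=-\infty$, $-\infty$ if $a=+\infty$; for a column vector $x$, $x^-$ is the row vector $(x_i^-)$. Thus $x^-\otimes p=\max_i(p_i-x_i)$ and $q^-\otimes x=\max_i(x_i-q_i)$ (terms with $p_i=-\infty$ or $q_i=+\infty$ being $-\infty$). *)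

(* Defs.v *)
From HB Require Import structures.
From mathcomp Require Import all_boot all_order all_algebra.
From mathcomp Require Import all_classical all_reals ereal.
Set Implicit Arguments. Unset Strict Implicit. Unset Printing Implicit Defensive.
Import Order.TTheory GRing.Theory Num.Theory.
Local Open Scope classical_set_scope.
Local Open Scope ring_scope.
Local Open Scope ereal_scope.

(* An element of R_max = R ∪ {-oo}, represented in \bar R. *)
Definition in_Rmax (R : realType) (a : \bar R) : Prop := a <> +oo.

Definition int_or_inf (R : realType) (a : \bar R) : Prop :=
  a = -oo \/ a = +oo \/ exists z : int, a = (z%:~R)%:E.

Definition mp_mul (R : realType) (m n : nat) (A : 'I_m -> 'I_n -> \bar R)
  (x : 'I_n -> \bar R) : 'I_m -> \bar R :=
  fun i => \big[maxe/-oo]_(j < n) (A i j + x j).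

(* x^- ⊗ p = max_i (p_i - x_i) ; q^- ⊗ x = max_i (x_i - q_i), for real x. *)
Definition mp_objective (R : realType) (n : nat) (p q : 'I_n -> \bar R)
  (x : 'I_n -> R) : \bar R :=
  maxe (\big[maxe/-oo]_(i < n) (p i - (x i)%:E))
       (\big[maxe/-oo]_(i < n) ((x i)%:E - q i)).

Definition mp_feasible (R : realType) (m n : nat) (U V : 'I_m -> 'I_n -> \bar R)
  (b d : 'I_m -> \bar R) (x : 'I_n -> R) : Prop :=
  forall i : 'I_m,
    maxe (mp_mul U (fun j => (x j)%:E) i) (b i)
    <= maxe (mp_mul V (fun j => (x j)%:E) i) (d i).

Definition mp_optval (R : realType) (m n : nat) (U V : 'I_m -> 'I_n -> \bar R)
  (b d : 'I_m -> \bar R) (p q : 'I_n -> \bar R) : \bar R :=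
  ereal_inf [set mp_objective p q x | x in [set x | mp_feasible U V b d x]].

(* Main.v *)
Require Import Defs.
From HB Require Import structures.
From mathcomp Require Import all_boot all_order all_algebra.
From mathcomp Require Import all_classical all_reals ereal.
From mathcomp Require Import ring lra.
Import Order.TTheory GRing.Theory Num.Theory.
Local Open Scope classical_set_scope.
Local Open Scope ring_scope.
Local Open Scope ereal_scope.

Section S.
Context {R : realType}.

Definition good (f : R -> R) :=
  [/\ (forall a b : R, (a <= b)%R -> (f a <= f b)%R),
      (forall (z : int) (y : R), f (z%:~R + y)%R = (z%:~R + f y)%R) & f 0%R = 0%R].

Lemma floor_shift (z : int) (y : R) : Num.floor (z%:~R + y)%R = (z + Num.floor y)%R.
Proof.
apply: floor_def; have := floor_itv y; rewrite !intrD => /andP[h1 h2].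
apply/andP; split; lra.
Qed.

Lemma ceil_shift (z : int) (y : R) : Num.ceil (z%:~R + y)%R = (z + Num.ceil y)%R.
Proof.
apply: ceil_def; have := ceil_itv y; rewrite ?intrD ?intrB => /andP[h1 h2].
rewrite ?intrB ?intrD.
apply/andP; split; lra.
Qed.

Definition fe (y : R) : R := (Num.floor (y + 2^-1))%:~R.
Definition fo (y : R) : R := (((Num.floor y)%:~R + (Num.ceil y)%:~R) / 2)%R.

Lemma good_fe : good fe.
Proof.
split.
- move=> a b ab; rewrite /fe ler_int; apply: le_floor; lra.
- move=> z y; rewrite /fe -addrA floor_shift intrD //.
- by rewrite /fe add0r; apply/eqP; rewrite intr_eq0 floor_eq; apply/andP; split; rewrite /=; lra.
Qed.

Lemma good_fo : good fo.
Proof.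
split.
- move=> a b ab; rewrite /fo.
  have h1 : ((Num.floor a)%:~R <= (Num.floor b)%:~R :> R)%R by rewrite ler_int le_floor.
  have h2 : ((Num.ceil a)%:~R <= (Num.ceil b)%:~R :> R)%R by rewrite ler_int le_ceil.
  lra.
- move=> z y; rewrite /fo floor_shift ceil_shift !intrD; lra.
- by rewrite /fo floor0 ceil0 /=; lra.
Qed.

Lemma fe_val (j : int) (t : R) : (j%:~R <= t)%R -> (t < j%:~R + 2^-1)%R ->
  fe t = j%:~R /\ fe (- t)%R = (- j)%:~R.
Proof.
move=> h1 h2; rewrite /fe; split; congr intr; apply/eqP; rewrite floor_eq;
  rewrite ?intrD ?intrN; apply/andP; split; lra.
Qed.

Lemma fo_val (j : int) (t : R) : (j%:~R + 2^-1 < t)%R -> (t < j%:~R + 1)%R ->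
  fo t = (j%:~R + 2^-1)%R /\ fo (- t)%R = (- (j%:~R + 2^-1))%R.
Proof.
move=> h1 h2; rewrite /fo.
have e1 : Num.floor t = j by apply/eqP; rewrite floor_eq intrD; apply/andP; split; lra.
have e2 : Num.ceil t = (j + 1)%R by apply/eqP; rewrite ceil_eq addrK intrD; apply/andP; split; lra.
have e3 : Num.floor (- t)%R = (- j - 1)%R.
  by apply/eqP; rewrite floor_eq subrK; rewrite ?intrB ?intrD ?intrN; apply/andP; split; lra.
have e4 : Num.ceil (- t)%R = (- j)%R.
  by apply/eqP; rewrite ceil_eq; rewrite ?intrB ?intrD ?intrN; apply/andP; split; lra.
rewrite e1 e2 e3 e4; rewrite ?intrD ?intrB ?intrN; split; lra.
Qed.

Definition F (f : R -> R) (e : \bar R) : \bar R :=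
  match e with EFin r => (f r)%:E | +oo => +oo | -oo => -oo end.

Lemma F_le f : good f -> forall a b, a <= b -> F f a <= F f b.
Proof.
case=> hm _ _ [a| |] [b| |] //=; rewrite ?lee_fin ?leey ?leNye //.
- by apply: hm.
Qed.

Lemma F_max f : good f -> forall a b, F f (maxe a b) = maxe (F f a) (F f b).
Proof.
move=> g a b; case: (leP a b) => ab.
- by rewrite !max_r //; apply: F_le.
- by rewrite !max_l //; apply: F_le => //; apply: ltW.
Qed.

Lemma F_big f n (h : 'I_n -> \bar R) : good f ->
  F f (\big[maxe/-oo]_(j < n) h j) = \big[maxe/-oo]_(j < n) F f (h j).
Proof.
move=> g; elim/big_rec2: _ => //= i x y _ <-; exact: F_max.
Qed.

Lemma F_int u f : good f -> int_or_inf u -> F f u = u.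
Proof.
case=> _ hs h0 [->|[->|[z ->]]] //=.
by rewrite -[X in f X]addr0 hs h0 addr0.
Qed.

Lemma F_add f u y : good f -> int_or_inf u -> in_Rmax u ->
  F f (u + y%:E) = u + (f y)%:E.
Proof.
case=> _ hs _ [->|[->|[z ->]]] //= _.
by rewrite hs.
Qed.


Lemma le_bigmax n (g : 'I_n -> \bar R) i : g i <= \big[maxe/-oo]_(j < n) g j.
Proof. by rewrite (bigD1 i) //= le_max lexx. Qed.

Lemma bigmax_le n (g : 'I_n -> \bar R) c :
  (forall i, g i <= c) -> \big[maxe/-oo]_(j < n) g j <= c.
Proof.
move=> h; elim/big_rec: _ => [|i x _ hx]; first exact: leNye.
by rewrite ge_max h hx.
Qed.

Lemma mul_pres f m n (U : 'I_m -> 'I_n -> \bar R) x i : good f ->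
  (forall i j, in_Rmax (U i j)) -> (forall i j, int_or_inf (U i j)) ->
  mp_mul U (fun j => (f (x j))%:E) i = F f (mp_mul U (fun j => (x j)%:E) i).
Proof.
move=> g h1 h2; rewrite /mp_mul F_big //; apply: eq_bigr => j _.
by rewrite F_add.
Qed.

Lemma feas_pres f m n (U V : 'I_m -> 'I_n -> \bar R) b d x : good f ->
  (forall i j, in_Rmax (U i j)) -> (forall i j, in_Rmax (V i j)) ->
  (forall i j, int_or_inf (U i j)) -> (forall i j, int_or_inf (V i j)) ->
  (forall i, int_or_inf (b i)) -> (forall i, int_or_inf (d i)) ->
  mp_feasible U V b d x -> mp_feasible U V b d (fun j => f (x j)).
Proof.
move=> g hU hV iU iV ib id hx i.
rewrite !mul_pres // -(F_int (b i) f g (ib i)) -(F_int (d i) f g (id i)) -!(F_max f g).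
exact: F_le (hx i).
Qed.

Lemma obj_pres f n (p q : 'I_n -> \bar R) x (t s : R) : good f ->
  (forall j, in_Rmax (p j)) -> (forall j, int_or_inf (p j)) ->
  (forall j, q j <> -oo) -> (forall j, int_or_inf (q j)) ->
  mp_objective p q x <= t%:E -> (f t <= s)%R -> (- s <= f (- t))%R ->
  mp_objective p q (fun j => f (x j)) <= s%:E.
Proof.
case=> hm hs h0 hp ip hq iq ho h1 h2.
rewrite /mp_objective in ho *; move: ho; rewrite !ge_max => /andP[ho1 ho2].
apply/andP; split; apply: bigmax_le => i.
- have := le_trans (le_bigmax _ _ i) ho1.
  case: (ip i) => [->|[e|[z ->]]].
  + by move=> _; rewrite /= leNye.
  + by have := hp i; rewrite e.
  rewrite -EFinD !lee_fin => hz.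
  have : (f (z%:~R + - t) <= f (x i))%R by apply: hm; lra.
  rewrite hs; lra.
- have := le_trans (le_bigmax _ _ i) ho2.
  case: (iq i) => [e|[->|[z ->]]].
  + by have := hq i; rewrite e.
  + by move=> _ /=; rewrite addeNy leNye.
  + rewrite -?EFinB -?EFinD !lee_fin => hz.
    have : (f (x i) <= f (z%:~R + t))%R by apply: hm; lra.
    rewrite hs; lra.
Qed.

End S.

Theorem proposition9 (R : realType) (m n : nat)
  (U V : 'I_m -> 'I_n -> \bar R) (b d : 'I_m -> \bar R)
  (p q : 'I_n -> \bar R) :
  (forall i j, in_Rmax (U i j)) -> (forall i j, in_Rmax (V i j)) ->
  (forall i, in_Rmax (b i)) -> (forall i, in_Rmax (d i)) ->
  (forall j, in_Rmax (p j)) -> (forall j, q j <> -oo) ->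
  (forall i j, int_or_inf (U i j)) -> (forall i j, int_or_inf (V i j)) ->
  (forall i, int_or_inf (b i)) -> (forall i, int_or_inf (d i)) ->
  (forall j, int_or_inf (p j)) -> (forall j, int_or_inf (q j)) ->
  forall r : R, mp_optval U V b d p q = r%:E ->
  exists k : int, r = (k%:~R / 2)%R.
Proof.
move=> hU hV hb hd hp hq iU iV ib id ip iq r hr.
have lb : forall x, mp_feasible U V b d x -> r%:E <= mp_objective p q x.
  move=> x fx; rewrite -hr; apply: ereal_inf_lbound; by exists x.
have ap : forall t : R, (r < t)%R ->
    exists2 x, mp_feasible U V b d x & mp_objective p q x < t%:E.
  move=> t rt; have : mp_optval U V b d p q < t%:E by rewrite hr lte_fin.
  by case/ereal_inf_lt => y [x fx <-] yt; exists x.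
have key : forall (f : R -> R) (t s : R), good f -> (r < t)%R ->
    (forall y : R, (r <= y)%R -> (y < t)%R -> (f y <= s)%R /\ (-s <= f (-y))%R) ->
    (r <= s)%R.
  move=> f t s g rt H; case: (ap t rt) => x fx ox.
  have := lb x fx.
  case E: (mp_objective p q x) => [y| |] in ox * => ly.
  - rewrite lee_fin in ly; rewrite lte_fin in ox; case: (H y ly ox) => h1 h2.
    have o1 : mp_objective p q x <= y%:E by rewrite E.
    have := obj_pres _ _ _ _ _ _ _ g hp ip hq iq o1 h1 h2.
    have := lb _ (feas_pres _ _ _ _ _ _ _ _ g hU hV iU iV ib id fx).
    move=> a1 a2; have := le_trans a1 a2; by rewrite lee_fin.
  - by [].
  - by [].
set j := Num.floor r.
have /andP[j1 j2] := floor_itv r; rewrite intrD in j2.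
case: (ltrgtP r (j%:~R + 2^-1)%R) => h.
- have [e|ne] := eqVneq r j%:~R.
  + by exists (2 * j)%R; rewrite e intrM /=; field.
  + have jr : (j%:~R < r)%R by rewrite lt_neqAle eq_sym ne j1.
    have : (r <= j%:~R)%R.
      apply: (key fe (j%:~R + 2^-1)%R) => //; first exact: good_fe.
      move=> y ry yt; have hjy : (j%:~R <= y)%R by lra.
      have [-> ->] := fe_val j y hjy yt.
      by rewrite intrN; split.
    lra.
- have : (r <= j%:~R + 2^-1)%R.
    apply: (key fo (j%:~R + 1)%R) => //; first exact: good_fo.
    move=> y ry yt; have hjy : (j%:~R + 2^-1 < y)%R by lra.
    have [-> ->] := fo_val j y hjy yt.
    by split.
  lra.
- exists (2 * j + 1)%R; rewrite h intrD intrM /=; by field.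
Qed.
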